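(* Let $G$ and $H$ be finite vertex-transitive graphs with $\frac{\alpha(G)}{|V(G)|}\geq\frac{\alpha(H)}{|V(H)|}$. Then \[\alpha(G\times H)=\alpha(G)\,|V(H)|,\] and at least one of the following holds: (i) $G\times H$ is MIS-normal; (ii) $\frac{\alpha(G)}{|V(G)|}=\frac{\alpha(H)}{|V(H)|}$ and at least one of $G$, $H$ is IS-imprimitive; (iii) $\frac{\alpha(G)}{|V(G)|}>\frac{\alpha(H)}{|V(H)|}$ and $H$ is disconnected.
   Context: All graphs are finite and simple; $\alpha(G)$ denotes the independence number of $G$. The direct product $G\times H$ has vertex set $V(G)\times V(H)$, with $(u_1,v_1)$ adjacent to $(u_2,v_2)$ if and only if $u_1u_2\in E(G)$ and $v_1v_2\in E(H)$. A maximum independent set is an independent set of size $\alpha$. The product $G\times H$ is called MIS-normal if every maximum independent set of $G\times H$ is the preimage of an independent set of one factor under the corresponding projection, i.e. is of the form $I\times V(H)$ with $I$ independent in $G$, or $V(G)\times J$ with $J$ independent in $H$. For $A\subseteq V(G)$, let $N_G(A)=\{b\in V(G): ab\in E(G)\text{ for some }a\in A\}$ and $N_G[A]=N_G(A)\cup A$. A (nonempty) independent set $A$ of $G$ is called imprimitive if $|A|<\alpha(G)$ and $\frac{|A|}{|N_G[A]|}=\frac{\alpha(G)}{|V(G)|}$. The graph $G$ is IS-imprimitive if it has an imprimitive independent set, and IS-primitive otherwise. *)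

(* Defs.v *)
From HB Require Import structures.
From mathcomp Require Import all_boot all_order all_algebra all_fingroup.
Local Open Scope ring_scope.
Set Implicit Arguments. Unset Strict Implicit. Unset Printing Implicit Defensive.
Import Order.TTheory GRing.Theory Num.Theory.

Section Graphs.
Variable T : finType.

Definition simple_graph (e : rel T) : Prop := symmetric e /\ irreflexive e.

Definition independent (e : rel T) (A : {set T}) : bool :=
  [forall x in A, forall y in A, ~~ e x y].

Definition alpha (e : rel T) : nat :=
  \max_(A : {set T} | independent e A) #|A|.

Definition max_independent (e : rel T) (A : {set T}) : bool :=
  independent e A && (#|A| == alpha e).

Definition automorphism (e : rel T) (f : {perm T}) : Prop :=
  forall x y, e (f x) (f y) = e x y.

Definition vertex_transitive (e : rel T) : Prop :=
  forall x y, exists f : {perm T}, automorphism e f /\ f x = y.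

Definition connected (e : rel T) : Prop := forall x y, connect e x y.

Definition nbhd (e : rel T) (A : {set T}) : {set T} :=
  [set b | [exists a in A, e a b]].
Definition cnbhd (e : rel T) (A : {set T}) : {set T} := nbhd e A :|: A.

Definition ind_ratio (e : rel T) : rat := (alpha e)%:R / #|T|%:R.

Definition imprimitive (e : rel T) (A : {set T}) : Prop :=
  [/\ A != set0, independent e A, (#|A| < alpha e)%N &
      (#|A|%:R / #|cnbhd e A|%:R : rat) = ind_ratio e].

Definition IS_imprimitive (e : rel T) : Prop := exists A, imprimitive e A.
End Graphs.

Definition dprod_rel (T U : finType) (e1 : rel T) (e2 : rel U) : rel (T * U) :=
  fun p q => e1 p.1 q.1 && e2 p.2 q.2.

Definition MIS_normal (T U : finType) (e1 : rel T) (e2 : rel U) : Prop :=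
  forall S : {set T * U}, max_independent (dprod_rel e1 e2) S ->
    (exists2 I : {set T}, independent e1 I & S = setX I [set: U]) \/
    (exists2 J : {set U}, independent e2 J & S = setX [set: T] J).

(* Main.v *)
Require Import Defs.
From mathcomp Require Import all_boot all_order all_algebra.
From mathcomp Require Import all_fingroup.
Import Order.TTheory GRing.Theory Num.Theory.
Set Implicit Arguments. Unset Strict Implicit. Unset Printing Implicit Defensive.

Section Basic.
Local Open Scope nat_scope.
Variable T : finType.
Variable e : rel T.
Hypothesis He : simple_graph e.

Lemma gsym x y : e x y = e y x.
Proof. by case: He => s _; rewrite s. Qed.

Lemma eirr x : e x x = false.
Proof. by case: He => _ i; rewrite i. Qed.

Lemma independentP (A : {set T}) :
  reflect (forall x y, x \in A -> y \in A -> ~~ e x y) (independent e A).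
Proof.
apply: (iffP forall_inP) => [H x y xA yA | H x xA].
  by move: (H x xA) => /forall_inP; apply.
by apply/forall_inP => y yA; apply: H.
Qed.

Lemma indep_sub (A B : {set T}) : B \subset A -> independent e A -> independent e B.
Proof.
move=> sBA /independentP H; apply/independentP => x y xB yB.
by apply: H; apply: (subsetP sBA).
Qed.

Lemma alpha_ge (A : {set T}) : independent e A -> #|A| <= alpha e.
Proof. by move=> iA; exact: (@leq_bigmax_cond _ (fun A => independent e A) (fun A : {set T} => #|A|) A iA). Qed.

Lemma alpha_ex : exists M, max_independent e M.
Proof.
have h : 0 < #|[pred A : {set T} | independent e A]|.
  apply/card_gt0P; exists set0; rewrite inE; apply/independentP => x y; by rewrite inE.
have [M MI eqM] := eq_bigmax_cond (fun A : {set T} => #|A|) h.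
exists M; rewrite /max_independent; rewrite inE in MI; rewrite MI /=.
by rewrite /alpha eqM.
Qed.

Lemma max_indepP M : max_independent e M -> independent e M /\ #|M| = alpha e.
Proof. by case/andP => ? /eqP. Qed.

Lemma in_nbhd (A : {set T}) b : (b \in nbhd e A) = [exists a in A, e a b].
Proof. by rewrite inE. Qed.

Lemma sub_cnbhd (A : {set T}) : A \subset cnbhd e A.
Proof. by apply/subsetP => x xA; rewrite /cnbhd inE xA orbT. Qed.

Lemma alpha_gt0 : 0 < #|T| -> 0 < alpha e.
Proof.
case/card_gt0P => x _; apply: leq_trans (alpha_ge (A := [set x]) _).
  by rewrite cards1.
apply/independentP => y z; rewrite !inE => /eqP -> /eqP ->; by rewrite eirr.
Qed.

Lemma max_dominate M : max_independent e M -> forall x, x \in cnbhd e M.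
Proof.
move=> /max_indepP [iM cM] x; rewrite /cnbhd inE; apply/negPn/negP.
rewrite negb_or => /andP [nN nM].
have: independent e (x |: M).
  apply/independentP => y z; rewrite !inE => /orP [/eqP -> | yM] /orP [/eqP -> | zM].
  - by rewrite eirr.
  - apply/negP => exz; apply: (negP nN); rewrite in_nbhd; apply/exists_inP; exists z => //.
    by rewrite gsym.
  - apply/negP => eyx; apply: (negP nN); rewrite in_nbhd; apply/exists_inP; by exists y.
  - by move/independentP: iM; apply.
move/alpha_ge; rewrite cardsU1 nM -cM; by rewrite ltnn.
Qed.

Lemma exchange (A M : {set T}) : independent e A -> max_independent e M ->
  #|A| <= #|M :&: cnbhd e A|.
Proof.
move=> iA /max_indepP [iM cM].
set N := cnbhd e A.
have nb : forall u v, u \in A -> v \notin N -> ~~ e u v.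
  move=> u v uA; rewrite /N /cnbhd !inE negb_or => /andP [H _].
  apply/negP => euv; apply: (negP H); apply/exists_inP; by exists u.
have iM' : independent e ((M :\: N) :|: A).
  apply/independentP => x y /setUP [/setDP [xM xN] | xA] /setUP [/setDP [yM yN] | yA].
  - by move/independentP: iM; apply.
  - by rewrite gsym; apply: nb.
  - by apply: nb.
  - by move/independentP: iA; apply.
have := alpha_ge iM'.
rewrite cardsU.
have -> : (M :\: N) :&: A = set0.
  apply/setP => x; rewrite !inE; apply/negP => /andP [/andP [xN _] xA].
  by rewrite xA orbT in xN.
rewrite cards0 subn0 -cM.
rewrite -(cardsID N M) => H.
move: H.
by rewrite [X in X <= _]addnC leq_add2r.
Qed.
End Basic.
Section Count.
Local Open Scope nat_scope.
Lemma card_sum (T : finType) (P : pred T) : #|[set x | P x]| = \sum_x P x.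
Proof.
rewrite -sum1_card big_mkcond /=; apply: eq_bigr => x _; rewrite inE; by case: (P x).
Qed.
End Count.

Section VT.
Local Open Scope nat_scope.
Variable T : finType.
Variable e : rel T.
Hypothesis He : simple_graph e.
Hypothesis Hvt : vertex_transitive e.

Definition autb (g : {perm T}) := [forall x, forall y, e (g x) (g y) == e x y].

Lemma autbP g : reflect (automorphism e g) (autb g).
Proof.
apply: (iffP forallP) => [H x y | H x]; first by move/forallP: (H x) => /(_ y) /eqP.
by apply/forallP => y; rewrite H.
Qed.

Lemma autbM g h : autb g -> autb h -> autb (g * h)%g.
Proof. by move=> /autbP Hg /autbP Hh; apply/autbP => x y; rewrite !permM Hh Hg. Qed.

Lemma autb1 : autb 1%g.
Proof. by apply/autbP => x y; rewrite !perm1. Qed.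

Lemma vt_lemma (A : {set T}) : independent e A ->
  #|A| * #|T| <= alpha e * #|cnbhd e A|.
Proof.
move=> iA.
have [M MM] := alpha_ex e.
have [iM cM] := max_indepP MM.
set N := cnbhd e A.
set P := [set g | autb g].
pose c u := \sum_g ((g \in P) && (g u \in M)).
have cle : forall u v, c u <= c v.
  move=> u v; have [h [/autbP hA hvu]] := Hvt v u.
  rewrite /c -!card_sum.
  rewrite -(card_imset _ (mulgI h)).
  apply: subset_leq_card; apply/subsetP => g' /imsetP [g]; rewrite !inE => /andP [gP gM] ->.
  by rewrite autbM // permM hvu gM.
have cc : forall u v, c u = c v by move=> u v; apply/eqP; rewrite eqn_leq !cle.
have [u0 _ | T0] := pickP (fun _ : T => true); last first.
  have -> : #|T| = 0 by apply: eq_card0 => x; rewrite !inE T0.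
  by rewrite muln0.
have S1 : \sum_u c u = #|P| * #|M|.
  rewrite /c exchange_big /= -sum_nat_const [RHS]big_mkcond /=.
  apply: eq_bigr => g _; case gP: (g \in P) => /=; last by rewrite big1.
  rewrite -card_sum -(card_preimset M (@perm_inj _ g)); apply: eq_card => x; by rewrite !inE.
have S1' : \sum_u c u = #|T| * c u0.
  by rewrite -sum_nat_const; apply: eq_bigr => u _; apply: cc.
have S2 : \sum_g (g \in P) * #|[set u | (g u \in M) && (u \in N)]| = #|N| * c u0.
  have -> : #|N| * c u0 = \sum_u (u \in N) * c u.
    rewrite -sum_nat_const big_mkcond /=; apply: eq_bigr => u _; rewrite mulnbl.
    by case: (u \in N) => //; rewrite cc.
  under eq_bigr => k _ do rewrite card_sum big_distrr /=.
  rewrite exchange_big /=; apply: eq_bigr => u _; rewrite /c big_distrr /=.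
  apply: eq_bigr => k _; rewrite !mulnb; by case: (k \in P); case: (k u \in M); case: (u \in N).
have S3 : #|P| * #|A| <= \sum_g (g \in P) * #|[set u | (g u \in M) && (u \in N)]|.
  rewrite -sum_nat_const big_mkcond /=; apply: leq_sum => k _.
  case gP: (k \in P); rewrite ?mul0n ?mul1n //.
  have MMg : max_independent e (k @^-1: M).
    rewrite /max_independent; apply/andP; split; last first.
      by rewrite card_preimset ?cM //; apply: perm_inj.
    apply/independentP => x y; rewrite !inE => xM yM.
    move: gP; rewrite inE => /autbP ag; rewrite -ag.
    by move/independentP: iM; apply.
  apply: leq_trans (exchange He iA MMg) _; rewrite -/N.
  by apply: subset_leq_card; apply/subsetP => x; rewrite !inE.
have P0 : 0 < #|P| by apply/card_gt0P; exists 1%g; rewrite inE autb1.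
have H : #|P| * #|A| * #|T| <= #|N| * c u0 * #|T|.
  by rewrite leq_mul2r -S2 S3 orbT.
have H2 : #|N| * c u0 * #|T| = #|P| * (alpha e * #|N|).
  by rewrite -mulnA (mulnC (c u0)) -S1' S1 cM mulnCA (mulnC #|N|).
rewrite H2 in H.
rewrite -(leq_pmul2l P0); apply: leq_trans H.
by rewrite mulnA.
Qed.
End VT.
Section Rat.
Local Open Scope ring_scope.
Lemma rat_le (p q r s : nat) : (0 < q)%N -> (0 < s)%N ->
  ((p%:R / q%:R : rat) <= r%:R / s%:R) = (p * s <= r * q)%N.
Proof.
move=> q0 s0.
by rewrite ler_pdivrMr ?ltr0n // mulrAC ler_pdivlMr ?ltr0n // -!natrM ler_nat.
Qed.
Lemma rat_lt (p q r s : nat) : (0 < q)%N -> (0 < s)%N ->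
  ((p%:R / q%:R : rat) < r%:R / s%:R) = (p * s < r * q)%N.
Proof.
move=> q0 s0.
by rewrite ltr_pdivrMr ?ltr0n // mulrAC ltr_pdivlMr ?ltr0n // -!natrM ltr_nat.
Qed.
Lemma rat_eq (p q r s : nat) : (0 < q)%N -> (0 < s)%N ->
  ((p%:R / q%:R : rat) = r%:R / s%:R) <-> (p * s = r * q)%N.
Proof.
move=> q0 s0; split => [H | H].
  by apply/eqP; rewrite -(eqr_nat rat) !natrM -eqr_div ?pnatr_eq0 -?lt0n // H.
by apply/eqP; rewrite eqr_div ?pnatr_eq0 -?lt0n // -!natrM H.
Qed.
End Rat.
From mathcomp Require Import zify.
From Stdlib Require Import Classical.
Section Comp.
Local Open Scope nat_scope.
Variable T : finType.
Variable e : rel T.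
Hypothesis He : simple_graph e.
Hypothesis Hvt : vertex_transitive e.

Lemma cnbhd0 : cnbhd e set0 = set0.
Proof. apply/setP => x; rewrite !inE; apply/negP; case/orP => //; case/existsP => a; by rewrite ?inE. Qed.

Lemma disconnected_imprimitive : ~ connected e -> IS_imprimitive e.
Proof.
move=> nc.
have [x [y nxy]] : exists x y, ~~ connect e x y.
  case: (boolP [forall x, forall y, connect e x y]) => [/forallP H | /forallPn [x /forallPn [y H]]].
    by exfalso; apply: nc => x y; move/forallP: (H x); apply.
  by exists x, y.
have n0 : 0 < #|T| by apply/card_gt0P; exists x.
set K := [set z | connect e x z].
have [M MM] := alpha_ex e.
have [iM cM] := max_indepP MM.
have dom := max_dominate He MM.
set A := M :&: K.
set B := M :\: K.
have Kcl : forall u v, u \in K -> e u v -> v \in K.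
  move=> u v; rewrite !inE => cu euv; apply: connect_trans cu (connect1 euv).
have Kcl' : forall u v, v \in K -> e u v -> u \in K.
  move=> u v vK euv; apply: (Kcl _ _ vK); by rewrite (gsym He).
have NA : cnbhd e A = K.
  apply/setP => z; apply/idP/idP.
    rewrite /cnbhd in_setU in_nbhd => /orP [/exists_inP [a aA eaz] | zA].
      by move: aA; rewrite inE => /andP [_ aK]; apply: Kcl _ _ aK eaz.
    by move: zA; rewrite inE => /andP [].
  move=> zK; move: (dom z); rewrite /cnbhd !in_setU in_nbhd => /orP [/exists_inP [a aM eaz] | zM].
  - apply/orP; left; rewrite in_nbhd; apply/exists_inP; exists a => //.
    by rewrite inE aM (Kcl' _ _ zK eaz).
  - by rewrite [z \in A]inE zM zK orbT.
have NB : cnbhd e B \subset ~: K.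
  apply/subsetP => z; rewrite /cnbhd in_setU in_nbhd => /orP [/exists_inP [b bB ebz] | zB].
    rewrite inE; apply/negP => zK.
    by move: bB; rewrite inE (Kcl' _ _ zK ebz).
  by move: zB; rewrite !inE => /andP [].
have iA : independent e A by apply: indep_sub iM; apply: subsetIl.
have iB : independent e B by apply: indep_sub iM; apply: subsetDl.
have hA := vt_lemma He Hvt iA.
have hB := vt_lemma He Hvt iB.
have hB' : #|cnbhd e B| <= #|T| - #|K|.
  by rewrite -(cardsC K) addKn; apply: subset_leq_card.
have hAB : #|A| + #|B| = alpha e by rewrite cardsID cM.
have hK : #|K| <= #|T| by apply: max_card.
rewrite NA in hA.
have eqA : #|A| * #|T| = alpha e * #|K|.
  have hB2 : #|B| * #|T| <= alpha e * (#|T| - #|K|).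
    by apply: leq_trans hB _; rewrite leq_mul2l hB' orbT.
  rewrite mulnBr in hB2.
  have hs : (#|A| + #|B|) * #|T| = alpha e * #|T| by rewrite hAB.
  rewrite mulnDl in hs.
  have hk : alpha e * #|K| <= alpha e * #|T| by rewrite leq_mul2l hK orbT.
  lia.
have xK : x \in K by rewrite inE connect0.
have yK : y \notin K by rewrite inE.
exists A; split.
- apply/negP => /eqP A0; move: xK; rewrite -NA A0 cnbhd0; by rewrite inE.
- exact: iA.
- have : 0 < #|B|.
    apply/card_gt0P; move: (dom y); rewrite /cnbhd !inE => /orP [/exists_inP [m mM emy] | yM].
      exists m; rewrite inE mM andbT; apply/negP => mK; by move: yK; rewrite (Kcl _ _ mK emy).
    by exists y; rewrite inE yM yK.
  lia.
- rewrite NA /ind_ratio; apply/rat_eq => //.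
  by apply/card_gt0P; exists x.
Qed.
End Comp.
Section Family.
Local Open Scope nat_scope.
Variables T U : finType.
Variable eG : rel T.
Variable eH : rel U.
Hypothesis HG : simple_graph eG.
Hypothesis HH : simple_graph eH.

Lemma family_const (F : U -> {set T}) :
  (forall y, independent eG (F y)) ->
  (forall y, #|F y| = alpha eG) ->
  (forall y y' x x', eH y y' -> x \in F y -> x' \in F y' -> ~~ eG x x') ->
  connected eH -> forall y0 y, F y = F y0.
Proof.
move=> iF cF noe con.
have adj : forall y y', eH y y' -> F y = F y'.
  move=> y y' eyy.
  have iU : independent eG (F y :|: F y').
    apply/independentP => x x' /setUP [xa | xb] /setUP [xa' | xb'].
    - by move/independentP: (iF y); apply.
    - by apply: noe eyy xa xb'.
    - by apply: noe xb xa'; rewrite (gsym HH).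
    - by move/independentP: (iF y'); apply.
  have c := alpha_ge iU.
  have e1 : F y = F y :|: F y'.
    by apply/eqP; rewrite eqEcard subsetUl /= cF.
  have e2 : F y' = F y :|: F y'.
    by apply/eqP; rewrite eqEcard subsetUr /= cF.
  by rewrite e1 -e2.
move=> y0 y.
have cl : closed eH [pred z | F z == F y0].
  by move=> u v euv; rewrite !inE /= (adj u v euv).
have := closed_connect cl (con y0 y).
by rewrite !inE /= eqxx => /esym /eqP.
Qed.
End Family.
Section Sums.
Local Open Scope nat_scope.
Lemma dcount (T U : finType) (R : T -> U -> bool) :
  \sum_x #|[set y | R x y]| = \sum_y #|[set x | R x y]|.
Proof.
under eq_bigr => x _ do rewrite card_sum.
rewrite exchange_big /=; apply: eq_bigr => y _; by rewrite card_sum.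
Qed.

Lemma card_pair (T U : finType) (S : {set T * U}) :
  #|S| = \sum_x #|[set y | (x, y) \in S]|.
Proof.
have -> : S = [set p | p \in S] by apply/setP => p; rewrite inE.
rewrite card_sum.
under [RHS]eq_bigr => x _ do rewrite card_sum.
rewrite pair_bigA /=; apply: eq_bigr => [[x y]] _; by rewrite inE.
Qed.

Lemma sum_le_eq (I : finType) (f g : I -> nat) :
  (forall i, f i <= g i) -> \sum_i f i = \sum_i g i -> forall i, f i = g i.
Proof.
move=> le eqs i.
have : \sum_i (g i - f i) == 0 by rewrite sumnB // eqs subnn.
rewrite sum_nat_eq0 => /forallP /(_ i) /=; rewrite subn_eq0 => H.
by apply/eqP; rewrite eqn_leq le H.
Qed.
End Sums.
Section Main.
Local Open Scope nat_scope.
Variables T U : finType.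
Variable eG : rel T.
Variable eH : rel U.
Hypothesis HG : simple_graph eG.
Hypothesis HH : simple_graph eH.
Hypothesis VG : vertex_transitive eG.
Hypothesis VH : vertex_transitive eH.
Hypothesis n0 : 0 < #|T|.
Hypothesis m0 : 0 < #|U|.
Hypothesis hr : alpha eH * #|T| <= alpha eG * #|U|.

Variable S : {set T * U}.
Hypothesis iS : independent (dprod_rel eG eH) S.

Lemma noedge x y x' y' : (x, y) \in S -> (x', y') \in S -> eG x x' -> eH y y' -> False.
Proof.
move=> p q ex ey; move/independentP: iS => /(_ _ _ p q); by rewrite /dprod_rel /= ex ey.
Qed.

Definition Sx x := [set y | (x, y) \in S].
Definition Jx x := Sx x :\: nbhd eH (Sx x).
Definition Dx x := Sx x :&: nbhd eH (Sx x).
Definition CD y := [set x | y \in Dx x].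
Definition NJ x := cnbhd eH (Jx x).
Definition W y := [set x | y \notin NJ x].

Lemma inSx x y : (y \in Sx x) = ((x, y) \in S).
Proof. by rewrite inE. Qed.

Lemma inJx x y : (y \in Jx x) = ((x, y) \in S) && ~~ [exists z, ((x, z) \in S) && eH z y].
Proof.
rewrite /Jx in_setD in_nbhd inSx andbC; congr (_ && ~~ _).
by apply: eq_existsb => z; rewrite inSx.
Qed.

Lemma inDx x y : (y \in Dx x) = ((x, y) \in S) && [exists z, ((x, z) \in S) && eH z y].
Proof.
rewrite /Dx in_setI in_nbhd inSx; congr (_ && _).
by apply: eq_existsb => z; rewrite inSx.
Qed.

Lemma inCD x y : (x \in CD y) = (y \in Dx x).
Proof. by rewrite /CD inE. Qed.

Lemma inW x y : (x \in W y) = (y \notin NJ x).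
Proof. by rewrite /W inE. Qed.

Lemma iJ x : independent eH (Jx x).
Proof.
apply/independentP => y z; rewrite !inJx => /andP [yS ny] /andP [zS nz].
apply/negP => eyz; move: nz; rewrite negb_exists => /forallP /(_ y).
by rewrite yS eyz.
Qed.

Lemma DnotNJ x y : y \in Dx x -> y \notin NJ x.
Proof.
rewrite inDx => /andP [yS /existsP [a /andP [aS eay]]].
rewrite /NJ /cnbhd in_setU in_nbhd negb_or; apply/andP; split.
  apply/negP => /exists_inP [j]; rewrite inJx => /andP [jS nj] ejy.
  move: nj; rewrite negb_exists => /forallP /(_ y).
  by rewrite yS (gsym HH) ejy.
rewrite inJx yS /= negbK; apply/existsP; exists a; by rewrite aS eay.
Qed.

Lemma iCD y : independent eG (CD y).
Proof.
apply/independentP => x x'; rewrite !inCD !inDx => /andP [_ /existsP [a /andP [aS eay]]] /andP [yS _].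
apply/negP => exx; exact: (noedge aS yS exx eay).
Qed.

Lemma NCD_W y : cnbhd eG (CD y) \subset W y.
Proof.
apply/subsetP => x'; rewrite /cnbhd in_setU in_nbhd => /orP [/exists_inP [x] | ].
  rewrite inCD inDx => /andP [xyS /existsP [a /andP [aS eay]]] exx.
  rewrite inW /NJ /cnbhd in_setU in_nbhd negb_or; apply/andP; split.
    apply/negP => /exists_inP [j]; rewrite inJx => /andP [jS _] ejy.
    apply: (noedge jS xyS _ ejy); by rewrite (gsym HG).
  rewrite inJx; apply/negP => /andP [yS _].
  exact: (noedge aS yS exx eay).
by rewrite inCD inW => /DnotNJ.
Qed.

Lemma hJ x : #|Jx x| * #|T| <= alpha eG * #|NJ x|.
Proof.
have h := vt_lemma HH VH (iJ x).
rewrite -(leq_pmul2r m0).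
have h1 : #|Jx x| * #|U| * #|T| <= alpha eH * #|NJ x| * #|T| by rewrite leq_mul2r h orbT.
have h2 : alpha eH * #|T| * #|NJ x| <= alpha eG * #|U| * #|NJ x| by rewrite leq_mul2r hr orbT.
nia.
Qed.

Lemma hC y : #|CD y| * #|T| <= alpha eG * #|W y|.
Proof.
apply: leq_trans (vt_lemma HG VG (iCD y)) _.
by rewrite leq_mul2l subset_leq_card ?orbT // NCD_W.
Qed.

Lemma sumS : #|S| = \sum_x #|Jx x| + \sum_y #|CD y|.
Proof.
rewrite card_pair.
have -> : \sum_y #|CD y| = \sum_x #|Dx x|.
  have E := dcount (fun x y => y \in Dx x); simpl in E.
  transitivity (\sum_y #|[set x | y \in Dx x]|); first by [].
  rewrite -E; apply: eq_bigr => x _.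
  by apply: eq_card => y; rewrite inE.
rewrite -big_split /=; apply: eq_bigr => x _.
rewrite -(cardsID (nbhd eH (Sx x)) (Sx x)) addnC.
by [].
Qed.

Lemma sumNW : \sum_x #|NJ x| + \sum_y #|W y| = #|T| * #|U|.
Proof.
have -> : \sum_y #|W y| = \sum_x #|~: NJ x|.
  have E := dcount (fun x y => y \notin NJ x); simpl in E.
  transitivity (\sum_y #|[set x | y \notin NJ x]|); first by [].
  rewrite -E; apply: eq_bigr => x _.
  by apply: eq_card => y; rewrite !inE.
rewrite -big_split /=.
under eq_bigr => x _ do rewrite cardsC.
by rewrite sum_nat_const.
Qed.

Lemma bound : #|S| <= alpha eG * #|U|.
Proof.
have hJ' := hJ; have hC' := hC; move: hJ' hC'.
set a := alpha eG => hJ' hC'; clearbody a.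
rewrite -(leq_pmul2r n0) sumS mulnDl !big_distrl.
have -> : a * #|U| * #|T| = \sum_x a * #|NJ x| + \sum_y a * #|W y|.
  by rewrite -!big_distrr -mulnDr sumNW mulnAC mulnA.
apply: leq_add; apply: leq_sum => i _; [exact: hJ' | exact: hC'].
Qed.

Lemma tight : #|S| = alpha eG * #|U| ->
  (forall x, #|Jx x| * #|T| = alpha eG * #|NJ x|) /\
  (forall y, #|CD y| * #|T| = alpha eG * #|W y|).
Proof.
move=> eqS.
have hJ' := hJ; have hC' := hC; move: hJ' hC' eqS.
set a := alpha eG => hJ' hC' eqS; clearbody a.
have e1 : \sum_x #|Jx x| * #|T| + \sum_y #|CD y| * #|T| =
   \sum_x a * #|NJ x| + \sum_y a * #|W y|.
  rewrite -!big_distrl -!big_distrr -mulnDl -mulnDr -sumS sumNW eqS.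
  by rewrite mulnAC mulnA.
have l1 : \sum_x #|Jx x| * #|T| <= \sum_x a * #|NJ x| by apply: leq_sum => x _; apply: hJ'.
have l2 : \sum_y #|CD y| * #|T| <= \sum_y a * #|W y| by apply: leq_sum => y _; apply: hC'.
split; apply: sum_le_eq.
- by move=> x; apply: hJ'.
- lia.
- by move=> y; apply: hC'.
- lia.
Qed.

Lemma SxJD x : Sx x = Jx x :|: Dx x.
Proof. by rewrite /Jx /Dx setUC setID. Qed.

Lemma cols : (forall x, Jx x = set0) -> (forall y, #|CD y| = alpha eG) ->
  (exists2 I, independent eG I & S = setX I setT) \/ ~ connected eH.
Proof.
move=> J0 cC.
have CDS : forall x y, (x \in CD y) = ((x, y) \in S).
  by move=> x y; rewrite inCD -inSx SxJD J0 set0U.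
case: (classic (connected eH)) => con; last by right.
left.
have [y0 _] : exists y0 : U, true by case/card_gt0P: m0 => y0 _; exists y0.
have fc := family_const HH (F := CD) iCD cC _ con y0.
exists (CD y0); first exact: iCD.
apply/setP => [[x y]]; rewrite in_setX in_setT andbT -CDS fc //.
move=> u u' z z' euu; rewrite !CDS => zS z'S; apply/negP => ezz.
exact: (noedge zS z'S ezz euu).
Qed.

Lemma rows : (forall y, CD y = set0) -> (forall x, #|Jx x| = alpha eH) ->
  (exists2 J, independent eH J & S = setX setT J) \/ ~ connected eG.
Proof.
move=> C0 cJ.
have JS : forall x y, (y \in Jx x) = ((x, y) \in S).
  move=> x y; rewrite -inSx SxJD in_setU.
  suff -> : (y \in Dx x) = false by rewrite orbF.
  by apply/negP; rewrite -inCD C0 inE.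
case: (classic (connected eG)) => con; last by right.
left.
have [x0 _] : exists x0 : T, true by case/card_gt0P: n0 => x0 _; exists x0.
have fc := family_const HG (F := Jx) iJ cJ _ con x0.
exists (Jx x0); first exact: iJ.
apply/setP => [[x y]]; rewrite in_setX in_setT /= -JS fc //.
move=> u u' z z' euu; rewrite !JS => zS z'S; apply/negP => ezz.
exact: (noedge zS z'S euu ezz).
Qed.

Lemma setT_card (V : finType) (A : {set V}) : #|A| = #|V| -> A = setT.
Proof. by move=> h; apply/eqP; rewrite eqEcard subsetT /= cardsT h leqnn. Qed.

Lemma analysis : #|S| = alpha eG * #|U| ->
  (exists2 I, independent eG I & S = setX I setT) \/
  (exists2 J, independent eH J & S = setX setT J) \/
  (alpha eH * #|T| = alpha eG * #|U| /\ (IS_imprimitive eG \/ IS_imprimitive eH)) \/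
  (alpha eH * #|T| < alpha eG * #|U| /\ ~ connected eH).
Proof.
move=> eqS; have [tJ tC] := tight eqS.
have a0 := alpha_gt0 HG n0.
have b0 := alpha_gt0 HH m0.
have JNJ x : #|Jx x| <= #|NJ x| by apply: subset_leq_card; apply: sub_cnbhd.
have hJH : forall x, #|Jx x| * #|U| <= alpha eH * #|NJ x|.
  by move=> x; exact: (vt_lemma HH VH (iJ x)).
move: hr; rewrite leq_eqVlt => /orP [/eqP heq | hlt]; last first.
  have NJ0 : forall x, #|NJ x| = 0.
    move=> x; have h1 := tJ x; have h2 := hJH x.
    have h3 : #|Jx x| * #|U| * #|T| <= alpha eH * #|NJ x| * #|T| by rewrite leq_mul2r h2 orbT.
    have h4 : alpha eG * #|U| * #|NJ x| <= alpha eH * #|T| * #|NJ x|.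
      have -> : alpha eG * #|U| * #|NJ x| = #|Jx x| * #|U| * #|T|.
        by rewrite mulnAC -h1 mulnAC.
      by rewrite [X in _ <= X]mulnAC.
    apply/eqP; move: h4; rewrite leq_mul2r; case: eqP => // _ /= h5.
    by move: (leq_ltn_trans h5 hlt); rewrite ltnn.
  have J0 : forall x, Jx x = set0.
    move=> x; apply: cards0_eq; apply/eqP; rewrite -leqn0 -(NJ0 x); exact: JNJ.
  have cC : forall y, #|CD y| = alpha eG.
    move=> y; have := tC y.
    have -> : W y = setT.
      by apply/setP => x; rewrite inW in_setT /NJ J0 cnbhd0 inE.
    by rewrite [#|[set: T]|]cardsT => /eqP; rewrite eqn_pmul2r // => /eqP.
  case: (cols J0 cC) => [h | h]; [left | right; right; right]; by [].
case: (classic (IS_imprimitive eG \/ IS_imprimitive eH)) => [imp | nimp].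
  by right; right; left.
have Jcase : forall x, Jx x = set0 \/ #|Jx x| = alpha eH.
  move=> x; case: (posnP #|Jx x|) => [/cards0_eq | Jpos]; first by left.
  right; apply/eqP; rewrite eqn_leq alpha_ge ?iJ //=; rewrite leqNgt; apply/negP => Jlt.
  apply: nimp; right; exists (Jx x); split => //.
  - by apply/negP => /eqP J0; move: Jpos; rewrite J0 cards0.
  - exact: iJ.
  - rewrite /ind_ratio; apply/rat_eq => //; first exact: leq_trans Jpos (JNJ x).
    apply/eqP; rewrite -(eqn_pmul2r n0); apply/eqP.
    have h := tJ x; rewrite /NJ in h; nia.
have Ccase : forall y, CD y = set0 \/ #|CD y| = alpha eG.
  move=> y; case: (posnP #|CD y|) => [/cards0_eq | Cpos]; first by left.
  right; apply/eqP; rewrite eqn_leq alpha_ge ?iCD //=; rewrite leqNgt; apply/negP => Clt.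
  apply: nimp; left; exists (CD y); split => //.
  - by apply/negP => /eqP C0; move: Cpos; rewrite C0 cards0.
  - exact: iCD.
  - have h1 := vt_lemma HG VG (iCD y).
    have h2 : alpha eG * #|cnbhd eG (CD y)| <= alpha eG * #|W y|.
      by rewrite leq_mul2l subset_leq_card ?orbT // NCD_W.
    have h3 := tC y.
    rewrite /ind_ratio; apply/rat_eq => //.
      by apply: leq_trans Cpos _; apply: subset_leq_card; apply: sub_cnbhd.
    lia.
case: (pickP (fun y => #|CD y| == alpha eG)) => [y1 /eqP hy1 | hC0].
  have Wy1 : W y1 = setT.
    apply: setT_card; have := tC y1; rewrite hy1 => /eqP.
    by rewrite eqn_pmul2l // => /eqP ->.
  have J0 : forall x, Jx x = set0.
    move=> x; case: (Jcase x) => // cJ.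
    have NJT : NJ x = setT.
      apply: setT_card; have := tJ x; rewrite cJ heq => /eqP.
      by rewrite eqn_pmul2l // => /eqP ->.
    have : x \in W y1 by rewrite Wy1 in_setT.
    by rewrite inW NJT in_setT.
  have cC : forall y, #|CD y| = alpha eG.
    apply: sum_le_eq => [y | ]; first by apply: alpha_ge; apply: iCD.
    rewrite sum_nat_const cardT -cardE mulnC -eqS sumS.
    have -> : \sum_x #|Jx x| = 0 by rewrite big1 // => x _; rewrite J0 cards0.
    by rewrite add0n.
  case: (cols J0 cC) => [h | h]; first by left.
  by exfalso; apply: nimp; right; apply: disconnected_imprimitive.
have C0 : forall y, CD y = set0.
  move=> y; case: (Ccase y) => // cy; by move: (hC0 y); rewrite cy eqxx.
have cJ : forall x, #|Jx x| = alpha eH.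
  apply: sum_le_eq => [x | ]; first by apply: alpha_ge; apply: iJ.
  rewrite sum_nat_const cardT -cardE mulnC heq -eqS sumS.
  have -> : \sum_y #|CD y| = 0 by rewrite big1 // => y _; rewrite C0 cards0.
  by rewrite addn0.
case: (rows C0 cJ) => [h | h]; first by right; left.
by exfalso; apply: nimp; left; apply: disconnected_imprimitive.
Qed.
End Main.
Unset Implicit Arguments.
Local Open Scope ring_scope.

Theorem theorem1p8 (T U : finType) (eG : rel T) (eH : rel U) :
  simple_graph eG -> simple_graph eH ->
  vertex_transitive eG -> vertex_transitive eH ->
  ind_ratio eH <= ind_ratio eG ->
  alpha (dprod_rel eG eH) = (alpha eG * #|U|)%N /\
  (MIS_normal eG eH \/
   (ind_ratio eG = ind_ratio eH /\ (IS_imprimitive eG \/ IS_imprimitive eH)) \/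
   (ind_ratio eH < ind_ratio eG /\ ~ connected eH)).
Proof.
move=> HG HH VG VH hr.
case: (posnP #|U|) => [m0 | m0].
  have noU : forall y : U, False.
    by move=> y; have := card0_eq m0 y; rewrite inE.
  have [S MS] := alpha_ex (dprod_rel eG eH).
  have [_ cS] := max_indepP MS.
  have S0 : forall A : {set T * U}, A = set0.
    by move=> A; apply/setP => [[x y]]; case: (noU y).
  split.
    by rewrite m0 muln0 -cS (S0 S) cards0.
  left => S' _; left; exists set0.
    by apply/independentP => x y; rewrite inE.
  by rewrite (S0 S') (S0 (setX _ _)).
case: (posnP #|T|) => [n0 | n0].
  exfalso; move: hr; rewrite /ind_ratio n0 invr0 mulr0.
  have b0 := alpha_gt0 HH m0.
  by rewrite leNgt divr_gt0 // ltr0n.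
have hr' : (alpha eH * #|T| <= alpha eG * #|U|)%N.
  by rewrite -rat_le.
have [S MS] := alpha_ex (dprod_rel eG eH).
have [iS cS] := max_indepP MS.
have aeq : alpha (dprod_rel eG eH) = (alpha eG * #|U|)%N.
  apply/eqP; rewrite eqn_leq; apply/andP; split.
    by rewrite -cS; apply: (bound HG HH VG VH n0 m0 hr' iS).
  have [M MM] := alpha_ex eG.
  have [iM cM] := max_indepP MM.
  rewrite -cM -(cardsT U) -cardsX; apply: alpha_ge.
  apply/independentP => [[x y] [x' y']]; rewrite !in_setX /dprod_rel /= => /andP [xM _] /andP [x'M _].
  apply/negP => /andP [exx _].
  by move/independentP: iM => /(_ x x' xM x'M); rewrite exx.
split => //.
case: (classic ((ind_ratio eG = ind_ratio eH /\ (IS_imprimitive eG \/ IS_imprimitive eH)) \/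
   (ind_ratio eH < ind_ratio eG /\ ~ connected eH))) => [h | nh]; first by right.
left => S' MS'.
have [iS' cS'] := max_indepP MS'.
rewrite aeq in cS'.
case: (analysis HG HH VG VH n0 m0 hr' iS' cS') => [h | [h | [[heq himp] | [hlt hc]]]].
- by left.
- by right.
- exfalso; apply: nh; left; split => //.
  rewrite /ind_ratio; apply/rat_eq => //; by rewrite heq.
- exfalso; apply: nh; right; split => //.
  by rewrite /ind_ratio rat_lt.
Qed.
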